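(* The logic $\mathsf{iKRI}:=\mathsf{ICK}\oplus((p\wedge(p\mathrel{\Box\!\!\!\rightarrow} q))\to q)\oplus(((p\mathrel{\Box\!\!\!\rightarrow} q)\wedge(q\mathrel{\Box\!\!\!\rightarrow} r))\to(p\mathrel{\Box\!\!\!\rightarrow} r))$ is sound and complete with respect to the class of conditional frames $(X,\leq,\mathcal{R})$ that satisfy, for all worlds $x\in X$ and upsets $a,b$: $x\in a$ implies $x\in{\uparrow}R_a[x]$, and $R_a[x]\subseteq b$ implies $R_a[x]\subseteq{\uparrow}R_b[x]$.
   Context: Formulas: $\phi ::= p\mid\bot\mid\phi\wedge\phi\mid\phi\vee\phi\mid\phi\to\phi\mid\phi\mathrel{\Box\!\!\!\rightarrow}\phi$. $\mathsf{ICK}\oplus\Gamma$ is the smallest set containing intuitionistic propositional logic, $\Gamma$, $(p\mathrel{\Box\!\!\!\rightarrow}(q\wedge r))\leftrightarrow((p\mathrel{\Box\!\!\!\rightarrow} q)\wedge(p\mathrel{\Box\!\!\!\rightarrow} r))$ and $(p\mathrel{\Box\!\!\!\rightarrow}\top)\leftrightarrow\top$, closed under uniform substitution, modus ponens and congruence rules for both arguments of $\mathrel{\Box\!\!\!\rightarrow}$. A conditional frame is $(X,\leq,\mathcal{R})$, $(X,\leq)$ a nonempty preorder, $\mathcal{R}=\{R_a\mid a\text{ an upset}\}$ with $(\leq\circ R_a)\subseteq(R_a\circ\leq)$; valuations assign upsets to letters and $x\models\phi\mathrel{\Box\!\!\!\rightarrow}\psi$ iff every $y$ with $xR_{V(\phi)}y$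 satisfies $\psi$. *)

(* Defs.v *)
From Stdlib Require Import Classical.

Inductive form : Set :=
  | Var : nat -> form
  | Bot : form
  | And : form -> form -> form
  | Or : form -> form -> form
  | Imp : form -> form -> form
  | Cond : form -> form -> form.

Definition Top : form := Imp Bot Bot.
Definition Iff (a b : form) : form := And (Imp a b) (Imp b a).

Fixpoint subst (s : nat -> form) (f : form) : form :=
  match f with
  | Var n => s n
  | Bot => Bot
  | And a b => And (subst s a) (subst s b)
  | Or a b => Or (subst s a) (subst s b)
  | Imp a b => Imp (subst s a) (subst s b)
  | Cond a b => Cond (subst s a) (subst s b)
  end.

Definition p := Var 0.
Definition q := Var 1.
Definition r := Var 2.

(** Hilbert-style axioms of intuitionistic propositional logic (in letters;
    all instances are obtained by closure under uniform substitution). *)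
Inductive ipc_axiom : form -> Prop :=
  | ipc_K : ipc_axiom (Imp p (Imp q p))
  | ipc_S : ipc_axiom (Imp (Imp p (Imp q r)) (Imp (Imp p q) (Imp p r)))
  | ipc_andE1 : ipc_axiom (Imp (And p q) p)
  | ipc_andE2 : ipc_axiom (Imp (And p q) q)
  | ipc_andI : ipc_axiom (Imp p (Imp q (And p q)))
  | ipc_orI1 : ipc_axiom (Imp p (Or p q))
  | ipc_orI2 : ipc_axiom (Imp q (Or p q))
  | ipc_orE : ipc_axiom (Imp (Imp p r) (Imp (Imp q r) (Imp (Or p q) r)))
  | ipc_efq : ipc_axiom (Imp Bot p).

Inductive ICK_plus (Gamma : form -> Prop) : form -> Prop :=
  | d_ipc : forall f, ipc_axiom f -> ICK_plus Gamma f
  | d_gamma : forall f, Gamma f -> ICK_plus Gamma f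
  | d_CM : ICK_plus Gamma (Iff (Cond p (And q r)) (And (Cond p q) (Cond p r)))
  | d_CN : ICK_plus Gamma (Iff (Cond p Top) Top)
  | d_subst : forall s f, ICK_plus Gamma f -> ICK_plus Gamma (subst s f)
  | d_mp : forall f g, ICK_plus Gamma (Imp f g) -> ICK_plus Gamma f -> ICK_plus Gamma g
  | d_congl : forall f g h, ICK_plus Gamma (Iff f g) ->
      ICK_plus Gamma (Iff (Cond f h) (Cond g h))
  | d_congr : forall f g h, ICK_plus Gamma (Iff f g) ->
      ICK_plus Gamma (Iff (Cond h f) (Cond h g)).

Inductive iKRI_axioms : form -> Prop :=
  | kri_mp : iKRI_axioms (Imp (And p (Cond p q)) q)
  | kri_trans : iKRI_axioms (Imp (And (Cond p q) (Cond q r)) (Cond p r)).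

Definition iKRI : form -> Prop := ICK_plus iKRI_axioms.

Definition upset {X : Type} (le : X -> X -> Prop) (a : X -> Prop) : Prop :=
  forall x y, le x y -> a x -> a y.

(** A conditional frame.  [fR a] is R_a; it is only constrained (and only
    ever used) for upsets a. Coherence (<= o R_a) ⊆ (R_a o <=) is read in
    diagrammatic order. *)
Record cframe := {
  world : Type;
  fle : world -> world -> Prop;
  fle_refl : forall x, fle x x;
  fle_trans : forall x y z, fle x y -> fle y z -> fle x z;
  f_inhabited : inhabited world;
  fR : (world -> Prop) -> world -> world -> Prop;
  f_coh : forall a, upset fle a ->
    forall x y z, fle x y -> fR a y z -> exists w, fR a x w /\ fle w z
}.

Definition valuation (F : cframe) := nat -> world F -> Prop.

Definition valid_val (F : cframe) (V : valuation F) : Prop :=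
  forall n, upset (fle F) (V n).

Fixpoint sat (F : cframe) (V : valuation F) (x : world F) (f : form) : Prop :=
  match f with
  | Var n => V n x
  | Bot => False
  | And a b => sat F V x a /\ sat F V x b
  | Or a b => sat F V x a \/ sat F V x b
  | Imp a b => forall y, fle F x y -> sat F V y a -> sat F V y b
  | Cond a b => forall y, fR F (fun z => sat F V z a) x y -> sat F V y b
  end.

Definition valid (F : cframe) (f : form) : Prop :=
  forall V : valuation F, valid_val F V -> forall x, sat F V x f.

Definition KRI_frame (F : cframe) : Prop :=
  (forall (a : world F -> Prop) x, upset (fle F) a -> a x ->
     exists y, fR F a x y /\ fle F y x) /\
  (forall (a b : world F -> Prop) x, upset (fle F) a -> upset (fle F) b ->
     (forall y, fR F a x y -> b y) ->
     forall y, fR F a x y -> exists z, fR F b x z /\ fle F z y).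

(* Main.v *)
Require Import Defs.
From Stdlib Require Import Classical List FunctionalExtensionality PropExtensionality Cantor Lia.
Import ListNotations.

Section Ax.
Variable G : form -> Prop.
Definition s3 (a b c : form) : nat -> form :=
  fun n => match n with 0 => a | 1 => b | _ => c end.

Lemma ax_sub f a b c : ipc_axiom f -> ICK_plus G (subst (s3 a b c) f).
Proof. intro H. apply d_subst. now apply d_ipc. Qed.
End Ax.

Notation T := iKRI.

Lemma T_K a b : T (Imp a (Imp b a)). Proof. exact (ax_sub _ _ a b a ipc_K). Qed.
Lemma T_S a b c : T (Imp (Imp a (Imp b c)) (Imp (Imp a b) (Imp a c))).
Proof. exact (ax_sub _ _ a b c ipc_S). Qed.
Lemma T_andE1 a b : T (Imp (And a b) a). Proof. exact (ax_sub _ _ a b a ipc_andE1). Qed.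
Lemma T_andE2 a b : T (Imp (And a b) b). Proof. exact (ax_sub _ _ a b a ipc_andE2). Qed.
Lemma T_andI a b : T (Imp a (Imp b (And a b))). Proof. exact (ax_sub _ _ a b a ipc_andI). Qed.
Lemma T_orI1 a b : T (Imp a (Or a b)). Proof. exact (ax_sub _ _ a b a ipc_orI1). Qed.
Lemma T_orI2 a b : T (Imp b (Or a b)). Proof. exact (ax_sub _ _ a b a ipc_orI2). Qed.
Lemma T_orE a b c : T (Imp (Imp a c) (Imp (Imp b c) (Imp (Or a b) c))).
Proof. exact (ax_sub _ _ a b c ipc_orE). Qed.
Lemma T_efq a : T (Imp Bot a). Proof. exact (ax_sub _ _ a a a ipc_efq). Qed.
Lemma T_CM a b c : T (Iff (Cond a (And b c)) (And (Cond a b) (Cond a c))).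
Proof. exact (d_subst _ (s3 a b c) _ (d_CM _)). Qed.
Lemma T_CN a : T (Iff (Cond a Top) Top).
Proof. exact (d_subst _ (s3 a a a) _ (d_CN _)). Qed.
Lemma T_kmp a b : T (Imp (And a (Cond a b)) b).
Proof. exact (d_subst _ (s3 a b b) _ (d_gamma _ _ kri_mp)). Qed.
Lemma T_ktr a b c : T (Imp (And (Cond a b) (Cond b c)) (Cond a c)).
Proof. exact (d_subst _ (s3 a b c) _ (d_gamma _ _ kri_trans)). Qed.

Inductive H : list form -> form -> Prop :=
  | H_ax : forall l f, T f -> H l f
  | H_hyp : forall l f, In f l -> H l f
  | H_mp : forall l f g, H l (Imp f g) -> H l f -> H l g.

Lemma H_weak l f : H l f -> forall l', (forall a, In a l -> In a l') -> H l' f.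
Proof.
  induction 1; intros l' Hs.
  - now apply H_ax.
  - apply H_hyp; auto.
  - eapply H_mp; eauto.
Qed.

Lemma H_T f : H [] f -> T f.
Proof.
  intro Hd. remember [] as l. induction Hd; subst.
  - auto.
  - simpl in *; contradiction.
  - eapply d_mp; [apply IHHd1|apply IHHd2]; reflexivity.
Qed.

Lemma H_mp' l a b : T (Imp a b) -> H l a -> H l b.
Proof. intros. eapply H_mp; [apply H_ax|]; eauto. Qed.
Lemma H_mp2 l a b c : T (Imp a (Imp b c)) -> H l a -> H l b -> H l c.
Proof. intros. eapply H_mp; [eapply H_mp'|]; eauto. Qed.
Lemma H_mp3 l a b c d : T (Imp a (Imp b (Imp c d))) -> H l a -> H l b -> H l c -> H l d.
Proof. intros. eapply H_mp; [eapply H_mp2|]; eauto. Qed.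

Lemma T_I a : T (Imp a a).
Proof.
  eapply d_mp. eapply d_mp. apply (T_S a (Imp a a) a). apply T_K. apply T_K.
Qed.

Lemma H_ded l a b : H (a :: l) b -> H l (Imp a b).
Proof.
  remember (a :: l) as l0. intro Hd. revert l Heql0. induction Hd; intros l' E; subst.
  - eapply H_mp'. apply T_K. now apply H_ax.
  - match goal with Hi : In _ _ |- _ => destruct Hi as [E|E] end.
    + subst. apply H_ax, T_I.
    + eapply H_mp'. apply T_K. now apply H_hyp.
  - eapply H_mp2. apply T_S. eauto. eauto.
Qed.

Lemma H_andI l a b : H l a -> H l b -> H l (And a b).
Proof. intros Ha Hb. exact (H_mp2 _ _ _ _ (T_andI a b) Ha Hb). Qed.
Lemma H_andE1 l a b : H l (And a b) -> H l a.
Proof. intros. eapply H_mp'; eauto. apply T_andE1. Qed.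
Lemma H_andE2 l a b : H l (And a b) -> H l b.
Proof. intros. eapply H_mp'; eauto. apply T_andE2. Qed.
Lemma H_orE l a b c : H l (Or a b) -> H (a :: l) c -> H (b :: l) c -> H l c.
Proof. intros H1 H2 H3. exact (H_mp3 _ _ _ _ _ (T_orE a b c) (H_ded _ _ _ H2) (H_ded _ _ _ H3) H1). Qed.
Lemma H_cut l a b : H l a -> H (a :: l) b -> H l b.
Proof. intros H1 H2. exact (H_mp _ _ _ (H_ded _ _ _ H2) H1). Qed.
Lemma H_Top l : H l Top.
Proof. apply H_ax, T_I. Qed.
Lemma H_nil l f : T f -> H l f.
Proof. apply H_ax. Qed.


Lemma persist (F : cframe) (V : valuation F) : valid_val F V ->
  forall f x y, fle F x y -> sat F V x f -> sat F V y f.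
Proof.
  intros HV f. induction f; simpl; intros x y Hxy Hx.
  - exact (HV n x y Hxy Hx).
  - exact Hx.
  - destruct Hx; split; eauto.
  - destruct Hx; [left|right]; eauto.
  - intros z Hyz Hz. apply Hx; auto. eapply fle_trans; eauto.
  - intros z Hz.
    destruct (f_coh F (fun z => sat F V z f1) (fun u v => IHf1 u v) x y z Hxy Hz) as [w [Hw1 Hw2]].
    eapply IHf2; eauto.
Qed.

Lemma iff_sat F V x a b : sat F V x (Iff a b) -> sat F V x a -> sat F V x b.
Proof. simpl. intros [H1 _] Ha. apply H1; auto. apply fle_refl. Qed.

Lemma valid_iff F V : valid_val F V -> forall a b,
  (forall x, sat F V x a <-> sat F V x b) -> forall x, sat F V x (Iff a b).
Proof. intros HV a b E x. simpl. split; intros y _; apply E. Qed.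

Lemma sat_subst F V (s : nat -> form) :
  forall f x, sat F V x (subst s f) <-> sat F (fun n z => sat F V z (s n)) x f.
Proof.
  induction f; intro x; simpl.
  - tauto.
  - tauto.
  - rewrite IHf1, IHf2; tauto.
  - rewrite IHf1, IHf2; tauto.
  - split; intros Hx y Hy; [rewrite <- IHf1, <- IHf2|rewrite IHf1, IHf2]; auto.
  - assert (E : (fun z => sat F V z (subst s f1)) = (fun z => sat F (fun n z => sat F V z (s n)) z f1)).
    { apply functional_extensionality; intro z. apply propositional_extensionality. apply IHf1. }
    rewrite E. split; intros Hx y Hy; [rewrite <- IHf2|rewrite IHf2]; auto.
Qed.

Lemma soundness f : T f -> forall F, KRI_frame F -> valid F f.
Proof.
  induction 1 as [f Hf|f Hf| | |s f Hd IH|f g Hd1 IH1 Hd2 IH2|f g h Hd IH|f g h Hd IH];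
    intros F [K1 K2] V HV; pose proof (persist F V HV) as P.
  - intro x0; destruct Hf; simpl.
    + intros y _ Hp z Hyz _; exact (HV 0 y z Hyz Hp).
    + intros y _ H1 z Hyz H2 w Hzw H0w.
      exact (H1 w (fle_trans F _ _ _ Hyz Hzw) H0w w (fle_refl F w) (H2 w Hzw H0w)).
    + intros y _ [A B]; auto.
    + intros y _ [A B]; auto.
    + intros y _ A z Hyz B; split; [exact (HV 0 y z Hyz A)|exact B].
    + intros y _ A; left; auto.
    + intros y _ A; right; auto.
    + intros y _ H1 z Hyz H2 w Hzw [A|A].
      * exact (H1 w (fle_trans F _ _ _ Hyz Hzw) A).
      * exact (H2 w Hzw A).
    + intros y _ [].
  - intro x0; destruct Hf; simpl.
    + intros y Hxy [Hp Hc].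
      destruct (K1 (fun z => V 0 z) y (HV 0) Hp) as [w [Hw1 Hw2]].
      exact (HV 1 w y Hw2 (Hc w Hw1)).
    + intros y Hxy [H1 H2] z Hz.
      destruct (K2 (fun z => V 0 z) (fun z => V 1 z) y (HV 0) (HV 1) H1 z Hz) as [w [Hw1 Hw2]].
      exact (HV 2 w z Hw2 (H2 w Hw1)).
  - simpl. split.
    + intros y _ Hy. split; intros z Hz; apply Hy; auto.
    + intros y _ [H1 H2] z Hz; split; auto.
  - simpl. split; intros; auto.
  - intro x. apply sat_subst. apply (IH F (conj K1 K2)).
    intros n u v Huv Hu. eapply P; eauto.
  - intro x. pose proof (IH1 F (conj K1 K2) V HV x) as Hi. simpl in Hi.
    apply Hi. apply fle_refl. apply IH2; auto. split; auto.
  - intro x. assert (E : (fun z => sat F V z f) = (fun z => sat F V z g)).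
    { apply functional_extensionality; intro z. apply propositional_extensionality.
      pose proof (IH F (conj K1 K2) V HV z) as Hi. split; apply iff_sat; auto.
      destruct Hi as [A B]. split; auto. }
    apply valid_iff; auto. intro y. simpl. rewrite E. tauto.
  - intro x. apply valid_iff; auto. intro y. simpl.
    assert (E : forall z, sat F V z f <-> sat F V z g).
    { intro z. pose proof (IH F (conj K1 K2) V HV z) as Hi. split; apply iff_sat; auto.
      destruct Hi as [A B]. split; auto. }
    split; intros Hy z Hz; apply E; auto.
Qed.

Definition triv_frame : cframe.
Proof.
  refine {| world := unit; fle := fun _ _ => True; fR := fun _ _ _ => True |}.
  - auto. - auto. - exact (inhabits tt). - intros. exists z; auto.
Defined.

Lemma consistent : ~ T Bot.
Proof.
  intro Hb. pose proof (soundness Bot Hb triv_frame) as S.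
  refine (S _ (fun _ _ => True) _ tt).
  - split; intros; simpl; eauto.
  - intros n u v _ _; exact I.
Qed.

Fixpoint code (f : form) : nat :=
  match f with
  | Var n => to_nat (0, n)
  | Bot => to_nat (1, 0)
  | And a b => to_nat (2, to_nat (code a, code b))
  | Or a b => to_nat (3, to_nat (code a, code b))
  | Imp a b => to_nat (4, to_nat (code a, code b))
  | Cond a b => to_nat (5, to_nat (code a, code b))
  end.

Lemma to_nat_inj a b : to_nat a = to_nat b -> a = b.
Proof. intro E. rewrite <- (cancel_of_to a), <- (cancel_of_to b), E. reflexivity. Qed.

Lemma code_inj : forall f g, code f = code g -> f = g.
Proof.
  induction f; destruct g; intro E; cbn [code] in E; apply to_nat_inj in E;
    pose proof (f_equal fst E) as Ef; pose proof (f_equal snd E) as Es; cbn [fst snd] in Ef, Es;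
    try discriminate Ef; try reflexivity.
  1: rewrite Es; reflexivity.
  all: apply to_nat_inj in Es;
    pose proof (f_equal fst Es) as Ef1; pose proof (f_equal snd Es) as Es1; cbn [fst snd] in Ef1, Es1;
    f_equal; auto.
Qed.

Definition derives (G : form -> Prop) f := exists l, (forall a, In a l -> G a) /\ H l f.

Record pw := { mem : form -> Prop;
  mem_cl : forall l f, (forall a, In a l -> mem a) -> H l f -> mem f;
  mem_cons : ~ mem Bot;
  mem_pr : forall a b, mem (Or a b) -> mem a \/ mem b }.

Lemma derives_mono (G G' : form -> Prop) f : (forall a, G a -> G' a) -> derives G f -> derives G' f.
Proof. intros Hs [l [Hl Hd]]. exists l; split; auto. Qed.

Lemma separate (P : form -> Prop) c f : derives (fun d => P d \/ d = c) f ->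
  exists l, (forall a, In a l -> P a) /\ H (c :: l) f.
Proof.
  intros [l [Hl Hd]].
  assert (Hx : exists l', (forall a, In a l' -> P a) /\ (forall a, In a l -> a = c \/ In a l')).
  { clear Hd. induction l as [|a l IH].
    - exists []; simpl; split; intros; contradiction.
    - destruct IH as [l' [H1 H2]]. { intros; apply Hl; simpl; auto. }
      destruct (Hl a (or_introl eq_refl)) as [Pa|Ea].
      + exists (a :: l'); split.
        * intros b [E|Hb]; [subst; auto|auto].
        * intros b [E|Hb]; [subst; simpl; auto|]. destruct (H2 b Hb); simpl; auto.
      + exists l'; split; auto. intros b [E|Hb]; [subst; auto|auto]. }
  destruct Hx as [l' [H1 H2]]. exists l'; split; auto.
  eapply H_weak; eauto. intros a Ha. destruct (H2 a Ha); simpl; auto.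
Qed.

Section Lind.
Variable G : form -> Prop.
Variable psi : form.
Hypothesis HG : ~ derives G psi.

Fixpoint Gs (n : nat) : form -> Prop :=
  match n with
  | 0 => G
  | Datatypes.S m => fun c => Gs m c \/ (code c = m /\ ~ derives (fun d => Gs m d \/ d = c) psi)
  end.

Lemma Gs_mono m n c : m <= n -> Gs m c -> Gs n c.
Proof. induction 1; simpl; auto. Qed.

Lemma Gs_cons n : ~ derives (Gs n) psi.
Proof.
  induction n as [|m IH]; simpl; auto.
  destruct (classic (exists c, code c = m /\ ~ derives (fun d => Gs m d \/ d = c) psi)) as [[c [Ec Hc]]|Hn].
  - intro D. apply Hc. eapply derives_mono; [|exact D]. simpl.
    intros a [Ha|[Ea _]]; auto. right. apply code_inj. congruence.
  - intro D. apply IH. eapply derives_mono; [|exact D]. simpl.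
    intros a [Ha|[Ea Ha]]; auto. exfalso; apply Hn; eauto.
Qed.

Definition Delta c := exists n, Gs n c.

Lemma Delta_fin l : (forall a, In a l -> Delta a) -> exists N, forall a, In a l -> Gs N a.
Proof.
  induction l as [|b l IH]; intro Hl.
  - exists 0; simpl; intros; contradiction.
  - destruct IH as [N HN]. { intros; apply Hl; simpl; auto. }
    destruct (Hl b (or_introl eq_refl)) as [k Hk].
    exists (Nat.max N k). intros a [E|Ha].
    + subst. eapply Gs_mono; [|eauto]; lia.
    + eapply Gs_mono; [|eauto]; lia.
Qed.

Lemma Delta_cons : ~ derives Delta psi.
Proof.
  intros [l [Hl Hd]]. destruct (Delta_fin l Hl) as [N HN]. apply (Gs_cons N). exists l; auto.
Qed.

Lemma Delta_sub a : G a -> Delta a.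
Proof. intro; exists 0; auto. Qed.

Lemma Delta_out c : ~ Delta c -> exists l, (forall a, In a l -> Delta a) /\ H (c :: l) psi.
Proof.
  intro Hc. apply separate.
  destruct (classic (derives (fun d => Gs (code c) d \/ d = c) psi)) as [D|D].
  - eapply derives_mono; [|exact D]. intros a [Ha|Ha]; [left; exists (code c)|right]; auto.
  - exfalso. apply Hc. exists (Datatypes.S (code c)). simpl. right. auto.
Qed.

Lemma Delta_cl l f : (forall a, In a l -> Delta a) -> H l f -> Delta f.
Proof.
  intros Hl Hd. apply NNPP; intro Hf. destruct (Delta_out f Hf) as [l' [Hl' Hd']].
  apply Delta_cons. exists (l ++ l'). split.
  - intros a Ha. apply in_app_or in Ha. destruct Ha; auto.
  - eapply H_cut.
    + eapply H_weak; [exact Hd|]. intros; apply in_or_app; auto.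
    + eapply H_weak; [exact Hd'|]. intros a [E|Ha]; [left; auto|right; apply in_or_app; auto].
Qed.

Lemma Delta_pr a b : Delta (Or a b) -> Delta a \/ Delta b.
Proof.
  intro Hab. apply NNPP; intro Hn. apply not_or_and in Hn. destruct Hn as [Ha Hb].
  destruct (Delta_out a Ha) as [l1 [H1 D1]]. destruct (Delta_out b Hb) as [l2 [H2 D2]].
  apply Delta_cons. exists (Or a b :: l1 ++ l2). split.
  - intros c [E|Hc]; [subst; auto|]. apply in_app_or in Hc; destruct Hc; auto.
  - apply (H_orE _ a b).
    + apply H_hyp; simpl; auto.
    + eapply H_weak; [exact D1|]. intros c [E|Hc]; [left; auto|right; right; apply in_or_app; auto].
    + eapply H_weak; [exact D2|]. intros c [E|Hc]; [left; auto|right; right; apply in_or_app; auto].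
Qed.

Lemma Delta_consis : ~ Delta Bot.
Proof.
  intro Hb. apply Delta_cons. exists [Bot]. split.
  - intros a [E|[]]; subst; auto.
  - eapply H_mp'. apply T_efq. apply H_hyp; simpl; auto.
Qed.

Definition Dw : pw := {| mem := Delta; mem_cl := Delta_cl; mem_cons := Delta_consis; mem_pr := Delta_pr |}.

End Lind.

Lemma lindenbaum G psi : ~ derives G psi -> exists w : pw, (forall a, G a -> mem w a) /\ ~ mem w psi.
Proof.
  intro HG. exists (Dw G psi HG). simpl. split.
  - apply Delta_sub.
  - intro D. apply (Delta_cons G psi HG). exists [psi]. split.
    + intros a [E|[]]; subst; auto.
    + apply H_hyp; simpl; auto.
Qed.

Lemma Tiff1 a b : T (Iff a b) -> T (Imp a b).
Proof. intro h. exact (d_mp _ _ _ (T_andE1 _ _) h). Qed.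
Lemma Tiff2 a b : T (Iff a b) -> T (Imp b a).
Proof. intro h. exact (d_mp _ _ _ (T_andE2 _ _) h). Qed.
Lemma Tiff a b : T (Imp a b) -> T (Imp b a) -> T (Iff a b).
Proof. intros h1 h2. exact (d_mp _ _ _ (d_mp _ _ _ (T_andI _ _) h1) h2). Qed.

Lemma mem_T (w : pw) f : T f -> mem w f.
Proof. intro h. apply (mem_cl w [] f). intros a []. now apply H_ax. Qed.
Lemma mem_mp (w : pw) a b : T (Imp a b) -> mem w a -> mem w b.
Proof.
  intros h ha. apply (mem_cl w [a] b).
  - intros c [E|[]]; subst; auto.
  - eapply H_mp'; [exact h|]. apply H_hyp; simpl; auto.
Qed.
Lemma mem_andI (w : pw) a b : mem w a -> mem w b -> mem w (And a b).
Proof.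
  intros ha hb. apply (mem_cl w [a; b]).
  - intros c [E|[E|[]]]; subst; auto.
  - apply H_andI; apply H_hyp; simpl; auto.
Qed.
Lemma mem_and (w : pw) a b : mem w (And a b) <-> mem w a /\ mem w b.
Proof.
  split.
  - intro h; split; eapply mem_mp; eauto; [apply T_andE1|apply T_andE2].
  - intros [ha hb]; now apply mem_andI.
Qed.

Lemma sem_imp a b : (forall w : pw, mem w a -> mem w b) -> T (Imp a b).
Proof.
  intro Hs. apply NNPP; intro n.
  destruct (lindenbaum (fun c => c = a) b) as [w [Hw1 Hw2]].
  - intros [l [Hl Hd]]. apply n. apply H_T, H_ded. eapply H_weak; [exact Hd|].
    intros c Hc. left. symmetry. auto.
  - apply Hw2, Hs, Hw1; reflexivity.
Qed.

Fixpoint conj (l : list form) : form :=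
  match l with [] => Top | a :: l => And a (conj l) end.

Lemma H_conj : forall l f, H l f -> T (Imp (conj l) f).
Proof.
  induction l as [|a l IH]; intros f Hd; simpl.
  - exact (d_mp _ _ _ (T_K f Top) (H_T _ Hd)).
  - pose proof (IH _ (H_ded _ _ _ Hd)) as h.
    apply H_T, H_ded.
    assert (Hh : H [And a (conj l)] (And a (conj l))) by (apply H_hyp; simpl; auto).
    eapply H_mp; [eapply H_mp; [apply H_ax; exact h|]|].
    + exact (H_andE2 _ _ _ Hh).
    + exact (H_andE1 _ _ _ Hh).
Qed.

Lemma mem_conj (x : pw) phi : forall l, (forall a, In a l -> mem x (Cond phi a)) ->
  mem x (Cond phi (conj l)).
Proof.
  induction l as [|a l IH]; intro Hl; simpl.
  - eapply mem_mp. apply Tiff2, T_CN. apply mem_T, T_I.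
  - eapply mem_mp. apply Tiff2, T_CM. apply mem_andI.
    + apply Hl; simpl; auto.
    + apply IH; intros; apply Hl; simpl; auto.
Qed.

Lemma Cl (x : pw) phi l psi : (forall a, In a l -> mem x (Cond phi a)) -> H l psi ->
  mem x (Cond phi psi).
Proof.
  intros Hl Hd. pose proof (H_conj _ _ Hd) as h. set (c := conj l) in *.
  assert (E : T (Iff c (And c psi))).
  { apply Tiff.
    - apply H_T, H_ded.
      assert (Hh : H [c] c) by (apply H_hyp; simpl; auto).
      apply H_andI; auto. eapply H_mp'; eauto.
    - apply T_andE1. }
  pose proof (d_congr _ _ _ phi E) as E2.
  pose proof (mem_mp x _ _ (Tiff1 _ _ E2) (mem_conj x phi l Hl)) as h2.
  pose proof (mem_mp x _ _ (Tiff1 _ _ (T_CM phi c psi)) h2) as h3.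
  exact (mem_mp x _ _ (T_andE2 _ _) h3).
Qed.

Lemma Lcond (x : pw) phi psi :
  (forall y : pw, (forall c, mem x (Cond phi c) -> mem y c) -> mem y psi) -> mem x (Cond phi psi).
Proof.
  intro Hs. apply NNPP; intro n.
  destruct (lindenbaum (fun c => mem x (Cond phi c)) psi) as [y [Hy1 Hy2]].
  - intros [l [Hl Hd]]. apply n. eapply Cl; eauto.
  - apply Hy2, Hs, Hy1.
Qed.

Definition Cx (P : pw -> Prop) (x : pw) (c : form) : Prop :=
  (exists phi, (forall z, P z <-> mem z phi) /\ mem x (Cond phi c)) \/
  ((forall phi, ~ forall z, P z <-> mem z phi) /\ mem x (Cond Top c)).

Lemma sem_eq a b : (forall z : pw, mem z a <-> mem z b) -> forall (x : pw) c,
  mem x (Cond a c) -> mem x (Cond b c).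
Proof.
  intros E x c h.
  assert (I : T (Iff a b)) by (apply Tiff; apply sem_imp; intro; apply E).
  exact (mem_mp x _ _ (Tiff1 _ _ (d_congl _ _ _ c I)) h).
Qed.

Lemma key (P : pw -> Prop) : exists k, (forall z, P z -> mem z k) /\
  forall x c, Cx P x c <-> mem x (Cond k c).
Proof.
  destruct (classic (exists phi, forall z, P z <-> mem z phi)) as [[phi Hp]|Hn].
  - exists phi. split; [intros z; apply Hp|]. intros x c. split.
    + intros [[psi [Hq h]]|[Hn _]].
      * eapply sem_eq; [|exact h]. intro z. rewrite <- Hq, Hp. tauto.
      * exfalso; exact (Hn phi Hp).
    + intro h. left. exists phi; auto.
  - exists Top. split; [intros; apply mem_T, T_I|]. intros x c. split.
    + intros [[psi [Hq h]]|[_ h]]; auto. exfalso; apply Hn; eauto.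
    + intro h. right. split; auto. intros phi Hp. apply Hn; eauto.
Qed.

Lemma Cx_def (P : pw -> Prop) a : (forall z, P z <-> mem z a) -> forall x c,
  Cx P x c <-> mem x (Cond a c).
Proof.
  intros Ha x c. split.
  - intros [[phi [Hq h]]|[Hn _]].
    + eapply sem_eq; [|exact h]. intro z. rewrite <- Hq, Ha. tauto.
    + exfalso; exact (Hn a Ha).
  - intro h; left; exists a; auto.
Qed.

Definition cle (x y : pw) : Prop := forall f, mem x f -> mem y f.
Definition cR (P : pw -> Prop) (x y : pw) : Prop := forall c, Cx P x c -> mem y c.

Lemma cinh : inhabited pw.
Proof.
  destruct (lindenbaum (fun _ => False) Bot) as [w _].
  - intros [l [Hl Hd]]. apply consistent. apply H_T. eapply H_weak; [exact Hd|].
    intros a Ha; destruct (Hl a Ha).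
  - exact (inhabits w).
Qed.

Lemma ccoh : forall a, upset cle a ->
    forall x y z, cle x y -> cR a y z -> exists w, cR a x w /\ cle w z.
Proof.
  intros a _ x y z Hxy Hyz. exists z. split; [|intros f; auto].
  intros c Hc. apply Hyz. destruct (key a) as [k [_ Hk]].
  apply Hk. apply Hxy. apply Hk. auto.
Qed.

Definition canon : cframe :=
  {| world := pw; fle := cle; fle_refl := fun x f h => h;
     fle_trans := fun x y z h1 h2 f h => h2 f (h1 f h);
     f_inhabited := cinh; fR := cR; f_coh := ccoh |}.

Lemma canon_KRI : KRI_frame canon.
Proof.
  split.
  - intros a x _ Ha. simpl in *. exists x. split; [|intros f; auto].
    destruct (key a) as [k [Hk1 Hk2]]. intros c Hc. apply Hk2 in Hc.
    eapply mem_mp. apply T_kmp. apply mem_andI; [apply Hk1; auto|exact Hc].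
  - intros a b x _ _ Hab y Hy. simpl in *. exists y. split; [|intros f; auto].
    destruct (key a) as [ka [Ha1 Ha2]]. destruct (key b) as [kb [Hb1 Hb2]].
    assert (Hab' : mem x (Cond ka kb)).
    { apply Lcond. intros y' Hy'. apply Hb1, Hab. intros c Hc. apply Hy', Ha2, Hc. }
    intros c Hc. apply Hy, Ha2. apply Hb2 in Hc.
    eapply mem_mp. apply T_ktr. apply mem_andI; eauto.
Qed.

Definition cV : valuation canon := fun n (x : pw) => mem x (Var n).

Lemma cV_valid : valid_val canon cV.
Proof. intros n x y Hxy Hx. apply Hxy, Hx. Qed.

Lemma truth : forall f (x : pw), sat canon cV x f <-> mem x f.
Proof.
  induction f as [n| |a IHa b IHb|a IHa b IHb|a IHa b IHb|a IHa b IHb]; intro x; simpl.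
  - unfold cV; tauto.
  - split; [contradiction|apply mem_cons].
  - rewrite IHa, IHb, mem_and; tauto.
  - rewrite IHa, IHb. split.
    + intros [h|h]; eapply mem_mp; eauto; [apply T_orI1|apply T_orI2].
    + apply mem_pr.
  - split.
    + intro Hs. apply NNPP; intro n.
      destruct (lindenbaum (fun c => mem x c \/ c = a) b) as [y [Hy1 Hy2]].
      * intro D. apply separate in D. destruct D as [l [Hl Hd]].
        apply n. eapply mem_cl; [exact Hl|]. apply H_ded, Hd.
      * apply Hy2, IHb, Hs.
        -- intros f h; apply Hy1; auto.
        -- apply IHa, Hy1; auto.
    + intros h y Hxy Hy. apply IHb. apply IHa in Hy. apply Hxy in h.
      apply (mem_cl y [Imp a b; a]).
      * intros c [E|[E|[]]]; subst; auto.
      * eapply H_mp; apply H_hyp; simpl; auto.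
  - pose proof (Cx_def (fun z => sat canon cV z a) a IHa) as CD. split.
    + intro Hs. apply Lcond. intros y Hy. apply IHb, Hs.
      intros c Hc. apply Hy, (CD x c), Hc.
    + intros h y Hy. apply IHb, Hy, CD, h.
Qed.

Theorem theorem5p12 :
  forall f : form, iKRI f <-> (forall F : cframe, KRI_frame F -> valid F f).
Proof.
  intro f. split.
  - intros Hf F K. exact (soundness f Hf F K).
  - intro Hv. apply NNPP; intro n.
    destruct (lindenbaum (fun _ => False) f) as [w [_ Hw]].
    + intros [l [Hl Hd]]. apply n. apply H_T. eapply H_weak; [exact Hd|].
      intros a Ha; destruct (Hl a Ha).
    + apply Hw, truth, (Hv canon canon_KRI cV cV_valid).
Qed.
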